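(* For each real number $\epsilon>0$ there is a positive integer $n$ and a subset $S\subseteq\mathbb{Z}/n\mathbb{Z}$ with $|S|\ge(1-\epsilon)n$ such that the congruence $abc\equiv d^2\pmod n$ has no solution with $a,b,c,d\in S$ (not necessarily distinct). *)

(* Defs.v *)
From mathcomp Require Import all_boot.
From Stdlib Require Import Reals.
Set Implicit Arguments. Unset Strict Implicit. Unset Printing Implicit Defensive.

(* Z/nZ is represented by the residues 'I_n = {0,...,n-1}; congruence mod n is
   ssrnat's  x = y %[mod n]  on the representatives. *)
Definition no_abc_d2 (n : nat) (S : {set 'I_n}) : Prop :=
  forall a b c d : 'I_n, a \in S -> b \in S -> c \in S -> d \in S ->
    ~ (a * b * c = d * d %[mod n]).

(* Main.v *)
From mathcomp Require Import all_boot all_order all_algebra.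
From mathcomp Require Import ring lra.
Require Import Defs.
Set Implicit Arguments. Unset Strict Implicit. Unset Printing Implicit Defensive.
Import Order.TTheory GRing.Theory Num.Theory.
Lemma mod_dvd_iff m x y : x = y %[mod m] -> (m %| x) = (m %| y).
Proof. by move=> H; rewrite /dvdn H. Qed.

Lemma local_bound p a b c d : prime p -> a * b * c = d * d %[mod p ^ 3] ->
  ~~ (p ^ 2 %| d) ->
  (p %| a) + (p %| b) + (p %| c) <= 2 * (p %| d).
Proof.
move=> pp H nd.
have Hp : a * b * c = d * d %[mod p].
  by rewrite -(modn_dvdm _ (dvdn_exp2l p (isT : 1 <= 3))) H modn_dvdm // dvdn_exp2l.
have pd := mod_dvd_iff Hp.
case: (boolP (p %| d)) => dd; last first.
  move: pd; rewrite [in X in _ = X]Euclid_dvdM // orbb (negbTE dd) => /negbT.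
  by rewrite !Euclid_dvdM // !negb_or => /andP[/andP[/negbTE-> /negbTE->] /negbTE->].
case: (boolP (p %| a)) => da; case: (boolP (p %| b)) => db; case: (boolP (p %| c)) => dc //=.
exfalso; move: nd; apply/negP/negPn.
have H3 : p ^ 3 %| a * b * c.
  by rewrite (_ : 3 = 1 + 1 + 1) // !expnD !dvdn_mul.
move: (mod_dvd_iff H); rewrite H3 => /esym.
case/dvdnP: dd => e ->.
rewrite (_ : e * p * (e * p) = (e * e) * p ^ 2); last by rewrite expnS expn1 mulnACA.
rewrite (_ : 3 = 1 + 2) // expnD dvdn_pmul2r ?expn_gt0 ?prime_gt0 // expn1.
by rewrite Euclid_dvdM // orbb => pe; rewrite expnS expn1 mulnC dvdn_pmul2l ?prime_gt0.
Qed.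

Local Open Scope ring_scope.

Lemma count_dvd_ord n d : (d %| n)%N -> (\sum_(x < n) (d %| x)%N = n %/ d)%N.
Proof.
move=> dn; rewrite divn_count_dvd -(big_mkord predT (fun x => nat_of_bool (d %| x)%N)).
apply/eqP; rewrite -(eqn_add2r (d %| n)) -big_nat_recr //= big_ltn //= dvdn0 addnC.
by rewrite dn big_add1.
Qed.

Definition fP (P : seq nat) (x : nat) : nat := (\sum_(p <- P) (p %| x)%N)%N.
Definition muP (P : seq nat) : rat := \sum_(p <- P) (p%:R)^-1.
Definition nP (P : seq nat) : nat := (\prod_(p <- P) p ^ 3)%N.

Lemma dvd_nP P p : p \in P -> (p ^ 3 %| nP P)%N.
Proof. by move=> pP; rewrite /nP (big_rem p) //= dvdn_mulr. Qed.

Lemma dvd1_nP P p : p \in P -> (p %| nP P)%N.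
Proof. by move=> pP; apply: dvdn_trans (dvd_nP pP); rewrite dvdn_exp. Qed.

Lemma dvd_pair P p q : all prime P -> p \in P -> q \in P -> p != q ->
  (p * q %| nP P)%N.
Proof.
move=> /allP aP pP qP pq; rewrite Gauss_dvd ?dvd1_nP //.
by rewrite prime_coprime ?aP // dvdn_prime2 ?aP.
Qed.

Lemma cnt_rat P d : (d %| nP P)%N -> (0 < d)%N ->
  \sum_(x < nP P) ((d %| x)%N%:R : rat) = (nP P)%:R / d%:R.
Proof.
move=> dn d0; rewrite -natr_sum count_dvd_ord // natr_div // unitfE pnatr_eq0 -lt0n //.
Qed.

Lemma nP_gt0 P : all prime P -> (0 < nP P)%N.
Proof.
rewrite /nP; elim: P => [|p P IH]; rewrite ?big_nil ?big_cons //= => /andP[pp aP].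
by rewrite muln_gt0 IH // expn_gt0 prime_gt0.
Qed.

Lemma var_bound P : uniq P -> all prime P ->
  \sum_(x < nP P) (((fP P x)%:R - muP P) ^+ 2) <= (nP P)%:R * muP P.
Proof.
move=> uP aP; set n := nP P.
pose I p (x : nat) : rat := (p %| x)%N%:R - (p%:R)^-1.
have E1 x : (fP P x)%:R - muP P = \sum_(p <- P) I p x.
  by rewrite /fP natr_sum /muP -sumrB.
have E2 x : (\sum_(p <- P) I p x) ^+ 2 = \sum_(p <- P) \sum_(q <- P) I p x * I q x.
  by rewrite expr2 mulr_suml; apply: eq_bigr => p _; rewrite mulr_sumr.
under eq_bigr do rewrite E1 E2.
rewrite exchange_big /=; under eq_bigr do rewrite exchange_big /=.
have pos p : p \in P -> (0 < p)%N by move=> pP; rewrite prime_gt0 ?(allP aP).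
have Hne p q : p \in P -> q \in P -> p != q -> \sum_(x < n) I p x * I q x = 0.
  move=> pP qP pq.
  have -> : \sum_(x < n) I p x * I q x = \sum_(x < n) (((p * q) %| x)%N%:R
      - (q%:R)^-1 * (p %| x)%N%:R - (p%:R)^-1 * (q %| x)%N%:R + (p%:R)^-1 * (q%:R)^-1).
    apply: eq_bigr => x _; rewrite /I Gauss_dvd; last first.
      by rewrite prime_coprime ?(allP aP) // dvdn_prime2 ?(allP aP).
    rewrite -mulnb natrM; ring.
  rewrite big_split !sumrB /= -!mulr_sumr !cnt_rat ?dvd_pair ?dvd1_nP ?muln_gt0 ?pos //.
  rewrite sumr_const card_ord natrM -[_ *+ n]mulr_natr.
  have p0 : p%:R != 0 :> rat by rewrite pnatr_eq0 -lt0n pos.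
  have q0 : q%:R != 0 :> rat by rewrite pnatr_eq0 -lt0n pos.
  rewrite -/n; field; by apply/andP.
have Heq p : p \in P -> \sum_(x < n) I p x * I p x <= n%:R * (p%:R)^-1.
  move=> pP.
  have -> : \sum_(x < n) I p x * I p x = \sum_(x < n) ((p %| x)%N%:R
      - 2%:R * (p%:R)^-1 * (p %| x)%N%:R + (p%:R)^-1 * (p%:R)^-1).
    apply: eq_bigr => x _; rewrite /I.
    have bb : (p %| x)%N%:R * (p %| x)%N%:R = (p %| x)%N%:R :> rat.
      by rewrite -natrM mulnb andbb.
    rewrite -[in X in _ = X - _ + _]bb; ring.
  rewrite big_split !sumrB /= -!mulr_sumr !cnt_rat ?dvd1_nP ?pos //.
  rewrite sumr_const card_ord -[_ *+ n]mulr_natr.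
  have p0 : (0 : rat) < p%:R by rewrite ltr0n pos.
  have n0 : (0 : rat) <= n%:R by rewrite ler0n.
  rewrite -/n; set c := (p%:R)^-1; set nr := n%:R.
  have h : 0 <= nr * (c * c) by apply: mulr_ge0 => //; apply: mulr_ge0; rewrite invr_ge0 ltW.
  nra.
rewrite /muP mulr_sumr big_seq_cond [X in _ <= X]big_seq_cond; apply: ler_sum => p /andP[pP _].
rewrite (bigD1_seq p) //=.
rewrite [X in _ + X](_ : _ = 0) ?addr0 ?Heq //.
rewrite big_seq_cond; apply: big1 => q /andP[qP qp]; by rewrite Hne // eq_sym.
Qed.

Lemma win (y m : rat) : (y - m) ^+ 2 < (m / 8%:R) ^+ 2 -> 0 <= m ->
  7%:R * m / 8%:R < y /\ y < 9%:R * m / 8%:R.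
Proof. move=> h m0; split; nra. Qed.

Definition tauP P : rat := \sum_(p <- P) ((p ^ 2)%:R)^-1.

Lemma has_le (T : Type) (a : pred T) (s : seq T) :
  (nat_of_bool (has a s) <= \sum_(i <- s) nat_of_bool (a i))%N.
Proof.
elim: s => [|x s IH]; rewrite ?big_nil ?big_cons //=.
by case: (a x) => //=; rewrite add0n.
Qed.

Lemma fP_sum P a b c d : all prime P -> (a * b * c = d * d %[mod nP P])%N ->
  ~~ has (fun p => p ^ 2 %| d)%N P ->
  (fP P a + fP P b + fP P c <= 2 * fP P d)%N.
Proof.
move=> aP H nh; rewrite /fP -!big_split /= big_distrr /= big_seq_cond [X in (_ <= X)%N]big_seq_cond.
apply: leq_sum => p /andP[pP _]; apply: local_bound; first by rewrite (allP aP).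
  by rewrite -(modn_dvdm (a * b * c) (dvd_nP pP)) H modn_dvdm // dvd_nP.
by apply: contra nh => h; apply/hasP; exists p.
Qed.

Lemma arith_fin (K n s H2 Z t : rat) : 1 <= K -> 0 <= n -> 0 <= Z -> 0 <= t ->
  t * (2 * K) <= 1 -> Z * (2 * K) <= n -> H2 <= n * t -> n <= s + H2 + Z ->
  (K - 1) * n <= K * s.
Proof.
move=> K1 n0 Z0 t0 Ht e1 Hh Hs.
have h1 : n * (t * (2 * K)) <= n * 1 by apply: ler_wpM2l.
have h2 : H2 * (2 * K) <= n * t * (2 * K) by apply: ler_wpM2r => //; lra.
have h3 : K * n <= K * (s + H2 + Z) by apply: ler_wpM2l; lra.
lra.
Qed.
Lemma arith1 (Z mu n K : rat) : 0 <= Z -> Z * mu <= 64 * n -> 128 * K <= mu -> Z * (2 * K) <= n.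
Proof.
move=> Z0 h1 h2; have : Z * (128 * K) <= Z * mu by apply: ler_wpM2l.
lra.
Qed.

Lemma nat_helper (K n s : nat) : (0 < K)%N ->
  (K%:R - 1) * n%:R <= K%:R * s%:R :> rat -> (K.-1 * n <= K * s)%N.
Proof. by move=> K0; rewrite -(ler_nat rat) !natrM -subn1 natrB. Qed.

Lemma core P (K : nat) : uniq P -> all prime P -> (0 < K)%N ->
  tauP P * (2 * K)%:R <= 1 -> (128 * K)%:R <= muP P ->
  exists S : {set 'I_(nP P)}, (K.-1 * nP P <= K * #|S|)%N /\ no_abc_d2 S.
Proof.
move=> uP aP K0 Htau Hmu.
set n := nP P; set mu := muP P.
have mu0 : 0 < mu by apply: lt_le_trans Hmu; rewrite ltr0n muln_gt0.
pose hs (x : nat) := has (fun p => p ^ 2 %| x)%N P.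
pose bad (x : nat) := (mu / 8%:R) ^+ 2 <= ((fP P x)%:R - mu) ^+ 2.
pose S := [set x : 'I_n | ~~ hs x && (((fP P x)%:R - mu) ^+ 2 < (mu / 8%:R) ^+ 2)].
exists S; split; last first.
  move=> a b c d; rewrite !inE => /andP[_ ha] /andP[_ hb] /andP[_ hc] /andP[hd hd2] H.
  have := fP_sum aP H hd; rewrite -(ler_nat rat) !natrD.
  have [a1 _] := win ha (ltW mu0); have [b1 _] := win hb (ltW mu0).
  have [c1 _] := win hc (ltW mu0); have [_ d1] := win hd2 (ltW mu0).
  move=> h; lra.
have Hpt (x : 'I_n) : 1 <= (x \in S)%:R + (hs x)%:R + (bad x)%:R :> rat.
  have b0 (b : bool) : 0 <= b%:R :> rat by rewrite ler0n.
  rewrite inE /bad; case: (hs x) => /=.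
    by have := b0 ((mu / 8%:R) ^+ 2 <= ((fP P x)%:R - mu) ^+ 2); have := b0 false; lra.
  case: ltP => /= _; lra.
have Hsum : n%:R <= \sum_(x < n) (x \in S)%:R + \sum_(x < n) (hs x)%:R + \sum_(x < n) (bad x)%:R :> rat.
  rewrite -!big_split /=; rewrite -[n in n%:R]card_ord -sumr_const.
  by apply: ler_sum => x _; apply: Hpt.
have HS : \sum_(x < n) (x \in S)%:R = #|S|%:R :> rat.
  rewrite -sum1_card natr_sum [in RHS]big_mkcond /=; apply: eq_bigr => x _.
  by case: (x \in S).
have Hhs : \sum_(x < n) (hs x)%:R <= n%:R * tauP P :> rat.
  apply: (@le_trans _ _ (\sum_(x < n) \sum_(p <- P) ((p ^ 2 %| x)%N)%:R)).
    by apply: ler_sum => x _; rewrite -natr_sum ler_nat has_le.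
  rewrite exchange_big /= /tauP mulr_sumr big_seq_cond [X in _ <= X]big_seq_cond.
  apply: ler_sum => p /andP[pP _]; rewrite cnt_rat ?expn_gt0 ?prime_gt0 ?(allP aP) //.
  by apply: dvdn_trans (dvd_nP pP); rewrite dvdn_exp2l.
have Hbad : (\sum_(x < n) (bad x)%:R) * (mu / 8%:R) ^+ 2 <= n%:R * mu.
  apply: le_trans (var_bound uP aP); rewrite mulr_suml; apply: ler_sum => x _.
  case E : (bad x) => /=; first by rewrite mul1r; exact: E.
  by rewrite mul0r sqr_ge0.
move: Hsum; rewrite HS.
set Z := \sum_(x < n) (bad x)%:R; set H2 := \sum_(x < n) (hs x)%:R.
have Z0 : 0 <= Z by apply: sumr_ge0 => x _; rewrite ler0n.
have HZ : Z * mu <= 64%:R * n%:R.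
  have : Z * mu * mu <= 64%:R * n%:R * mu.
    move: Hbad; have -> : (mu / 8%:R) ^+ 2 = mu * mu / 64%:R by field.
    have -> : Z * mu * mu = Z * (mu * mu / 64%:R) * 64%:R by field.
    have -> : 64%:R * n%:R * mu = n%:R * mu * 64%:R by ring.
    by move=> h; apply: ler_wpM2r; rewrite ?ler0n.
  by rewrite ler_pM2r.
move: Htau Hmu HZ Hhs; rewrite !natrM -!/mu -/n.
have K0' : (1 : rat) <= K%:R by rewrite ler1n.
move=> Ht Hm HZ Hh Hs.
have n0 : 0 <= n%:R :> rat by rewrite ler0n.
have t0 : 0 <= tauP P by apply: sumr_ge0 => p _; rewrite invr_ge0 ler0n.
apply: (nat_helper K0).
rewrite -/H2 in Hh.
apply: (arith_fin K0' n0 Z0 t0 Ht _ Hh Hs).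
exact: arith1 Z0 HZ Hm.
Qed.
Lemma logn_small p m : (0 < m)%N -> (logn p m < m.+1)%N.
Proof.
move=> m0; case: (boolP (prime p)) => pp; last by rewrite lognE (negbTE pp).
apply: (@leq_ltn_trans (p ^ logn p m)); last by rewrite ltnS dvdn_leq // pfactor_dvdnn.
apply: ltnW; apply: (@leq_trans (2 ^ logn p m)); first by rewrite ltn_expl.
by case: (logn p m) => [|l] //; rewrite leq_exp2r // prime_gt1.
Qed.

Lemma prod_logn N m : (m < N)%N ->
  (\prod_(i < N.+1) i ^ logn i m.+1)%N = m.+1.
Proof.
move=> mN; transitivity ((m.+1)`_predT)%N; last exact: partnT.
rewrite /partn -(big_mkord predT (fun i => i ^ logn i m.+1))%N.
rewrite [LHS](@big_cat_nat _ _ _ m.+2) //=.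
rewrite [X in (_ * X)%N]big1_seq ?muln1; last first.
  move=> i /andP[_]; rewrite mem_index_iota => /andP[hi _].
  case: (posnP (logn i m.+1)) => [-> //|]; rewrite logn_gt0 mem_primes => /and3P[_ _ d].
  by move: (dvdn_leq (ltn0Sn m) d); rewrite leqNgt hi.
by apply: eq_bigl.
Qed.

Definition gp (p : nat) : rat := (1 - (p%:R)^-1)^-1.

Lemma geom (x : rat) K : 0 <= x -> x < 1 -> \sum_(k < K) x ^+ k <= (1 - x)^-1.
Proof.
move=> x0 x1.
have E : (\sum_(k < K) x ^+ k) * (1 - x) = 1 - x ^+ K.
  elim: K => [|K IH]; first by rewrite big_ord0 mul0r expr0 subrr.
  by rewrite big_ord_recr /= mulrDl IH exprS; ring.
have h : 0 < 1 - x by rewrite subr_gt0.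
rewrite -(ler_pM2r h) E mulVf ?gt_eqF //.
by rewrite lerBlDr lerDl exprn_ge0.
Qed.

Lemma gp_ge (p : nat) : prime p -> 0 <= (p%:R : rat)^-1 /\ (p%:R : rat)^-1 < 1.
Proof.
move=> pp; have p1 : (1 : rat) < p%:R by rewrite ltr1n prime_gt1.
split; first by rewrite invr_ge0 ler0n.
by rewrite invf_lt1 // (lt_trans ltr01).
Qed.

Lemma euler N : \sum_(m < N) ((m.+1)%:R : rat)^-1 <= \prod_(i < N.+1 | prime i) gp i.
Proof.
pose F (i k : 'I_N.+1) : rat := if prime i then ((i%:R)^-1) ^+ k else (k == ord0)%:R.
have F0 i k : 0 <= F i k.
  rewrite /F; case: ifP => pi; last by rewrite ler0n.
  by rewrite exprn_ge0 // invr_ge0 ler0n.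
apply: (@le_trans _ _ (\prod_(i : 'I_N.+1) \sum_(k : 'I_N.+1) F i k)); last first.
  rewrite [X in _ <= X]big_mkcond /=; apply: ler_prod => i _.
  rewrite sumr_ge0 //=; rewrite /F; case: ifP => pi.
    by have [h1 h2] := gp_ge pi; apply: geom.
  rewrite (bigD1 ord0) //= big1 ?addr0 // => k /negbTE ->; done.
rewrite bigA_distr_bigA /=.
pose h (m : 'I_N) : {ffun 'I_N.+1 -> 'I_N.+1} := [ffun i : 'I_N.+1 => inord (logn i m.+1)].
have hkey (m : 'I_N) : \prod_i F i (h m i) = ((m.+1)%:R)^-1.
  rewrite -(prod_logn (ltn_ord m)) natr_prod -prodfV.
  apply: eq_bigr => i _; rewrite /F ffunE inordK; last by apply: (leq_trans (logn_small i (ltn0Sn m))); rewrite ltnS; exact: ltn_ord m.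
  case: ifP => pi; first by rewrite natrX exprVn.
  have l0 : logn i m.+1 = 0%N by rewrite lognE pi.
  rewrite l0 expn0 invr1 (_ : inord 0 = ord0) ?eqxx //.
  by apply/val_inj; rewrite /= inordK.
have hinj : {in [set: 'I_N] &, injective h}.
  move=> m1 m2 _ _ e; have := hkey m1; rewrite e hkey => /invr_inj/eqP.
  by rewrite eqr_nat eqSS => /eqP/val_inj.
apply: (@le_trans _ _ (\sum_(f in h @: [set: 'I_N]) \prod_i F i (f i))).
  rewrite big_imset //= le_eqVlt; apply/orP; left; apply/eqP.
  by apply: eq_big => m; [rewrite in_setT | rewrite hkey].
rewrite [X in _ <= X](bigID (mem (h @: [set: 'I_N]))) /= lerDl.
by apply: sumr_ge0 => f _; apply: prodr_ge0.
Qed.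

Lemma weier (I : Type) (r : seq I) (P : pred I) (y : I -> rat) :
  (forall i, P i -> 0 <= y i <= 1) ->
  1 - \sum_(i <- r | P i) y i <= \prod_(i <- r | P i) (1 - y i).
Proof.
move=> hy; elim: r => [|x r IH]; first by rewrite !big_nil subr0.
rewrite !big_cons; case: ifP => Px //.
have /andP[y0 y1] := hy x Px.
have p0 : 0 <= 1 - \sum_(i <- r | P i) y i -> True by [].
set S := \sum_(i <- r | P i) y i; set Q := \prod_(i <- r | P i) (1 - y i).
have h : (1 - y x) * (1 - S) <= (1 - y x) * Q by apply: ler_wpM2l; rewrite ?subr_ge0.
have S0 : 0 <= S by rewrite /S sumr_ge0 // => i Pi; have /andP[] := hy i Pi.
nra.
Qed.

Lemma harm k : (k%:R : rat) / 2%:R <= \sum_(m < 2 ^ k) ((m.+1)%:R : rat)^-1.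
Proof.
elim: k => [|k IH]; first by rewrite mul0r sumr_ge0 // => m _; rewrite invr_ge0 ler0n.
rewrite -(big_mkord predT (fun m => ((m.+1)%:R : rat)^-1)).
rewrite (@big_cat_nat _ _ _ (2 ^ k)) //=; last by rewrite leq_exp2l.
rewrite big_mkord.
have h : (1 / 2%:R : rat) <= \sum_(2 ^ k <= i < 2 ^ k.+1) ((i.+1)%:R : rat)^-1.
  apply: (@le_trans _ _ (\sum_(2 ^ k <= i < 2 ^ k.+1) ((2 ^ k.+1)%:R : rat)^-1)).
    rewrite sumr_const_nat expnS mul2n -addnn addnK natrD -[_ *+ 2 ^ k]mulr_natr.
    have a0 : (2 ^ k)%:R != 0 :> rat by rewrite pnatr_eq0 expn_eq0.
    rewrite (_ : ((2 ^ k)%:R + (2 ^ k)%:R)^-1 * (2 ^ k)%:R = 1 / 2%:R :> rat) //.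
    set a := (2 ^ k)%:R; field; by rewrite -mulr2n mulrn_eq0 a0.
  apply: ler_sum_nat => i /andP[_ hi]; rewrite lef_pV2 ?posrE ?ltr0n ?expn_gt0 //.
  by rewrite ler_nat.
have e : (k.+1)%:R = k%:R + 1 :> rat by rewrite mulrSr.
rewrite e mulrDl; lra.
Qed.

Lemma gp_le2 p : prime p -> 0 <= gp p <= 2.
Proof.
move=> pp; have [h1 h2] := gp_ge pp.
have p2 : (2 : rat) <= p%:R by rewrite ler_nat prime_gt1.
have hp : (p%:R : rat)^-1 <= 2^-1 by rewrite lef_pV2 ?posrE ?ltr0n ?prime_gt0.
have q0 : 0 < 1 - (p%:R : rat)^-1 by rewrite subr_gt0.
rewrite /gp invr_ge0 ltW //=.
have e : (1 - (p%:R : rat)^-1)^-1 * (1 - (p%:R)^-1) = 1 by rewrite mulVf ?gt_eqF.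
have : 0 <= (1 - (p%:R : rat)^-1)^-1 by rewrite invr_ge0 ltW.
move: e; set u := (1 - _)^-1; set v := (p%:R)^-1 => e u0.
have hp' : 2 * v <= 1.
  have : 2 * v <= 2 * 2^-1 by rewrite ler_wpM2l.
  by rewrite mulfV.
have : u * (2 * v) <= u * 1 by apply: ler_wpM2l.
lra.
Qed.

Lemma chunk_core B N : (B <= N)%N ->
  (2 ^ B.+4)%:R / 2%:R <= \sum_(m < N) ((m.+1)%:R : rat)^-1 ->
  1 / 2%:R <= \sum_(B.+1 <= p < N.+1 | prime p) ((p%:R : rat)^-1).
Proof.
move=> BN H1.
case: (lerP (1 / 2%:R) (\sum_(B.+1 <= p < N.+1 | prime p) ((p%:R : rat)^-1))) => [//|hlt].
exfalso.
have H2 := euler N.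
rewrite -(big_mkord (fun i => prime i) gp) (@big_cat_nat _ _ _ B.+1) in H2; [|by []|by rewrite ltnS].
set A := \prod_(0 <= i < B.+1 | prime i) gp i in H2.
set C := \prod_(B.+1 <= i < N.+1 | prime i) gp i in H2.
have A0 : 0 <= A by apply: prodr_ge0 => i pi; have /andP[] := gp_le2 pi.
have HA : A <= (2 ^ B.+1)%:R.
  rewrite natrX -(subn0 B.+1) -prodr_const_nat /A big_mkcond /=; apply: ler_prod => i _.
  by case: ifP => pi; [exact: gp_le2 | rewrite ler01 ler1n].
have HC : C <= 2.
  rewrite /C /gp prodfV.
  have W := @weier _ (index_iota B.+1 N.+1) (fun p => prime p) (fun p => (p%:R : rat)^-1).
  have W2 : 1 - \sum_(B.+1 <= p < N.+1 | prime p) (p%:R : rat)^-1 <=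
      \prod_(B.+1 <= p < N.+1 | prime p) (1 - (p%:R : rat)^-1).
    apply: W => p pp; have [h1 h2] := gp_ge pp; rewrite h1 /=; exact: ltW.
  move: W2 hlt; set Q := \prod_(_ <= _ < _ | _) _; set Sm := \sum_(_ <= _ < _ | _) _ => W3 hlt.
  have Q0 : 0 < Q by lra.
  have e : Q^-1 * Q = 1 by rewrite mulVf ?gt_eqF.
  have Qi : 0 <= Q^-1 by rewrite invr_ge0 ltW.
  nra.
have C0 : 0 <= C by apply: prodr_ge0 => i pi; have /andP[] := gp_le2 pi.
have HAC : A * C <= (2 ^ B.+1)%:R * 2 by apply: ler_pM.
have E8 : (2 ^ B.+4)%:R = 8 * (2 ^ B.+1)%:R :> rat.
  by rewrite -[B.+4]addn3 expnD natrM mulrC.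
have X0 : (0 : rat) < (2 ^ B.+1)%:R by rewrite ltr0n expn_gt0.
have H3 := le_trans H2 HAC.
move: H1 H3 X0; rewrite E8; set X := (2 ^ B.+1)%:R; set H := \sum_(m < N) _.
move=> H1 H3 X0; lra.
Qed.

Lemma chunk B : exists N, (B <= N)%N /\
  1 / 2%:R <= \sum_(B.+1 <= p < N.+1 | prime p) ((p%:R : rat)^-1).
Proof.
have hB : (B <= 2 ^ (2 ^ B.+4))%N.
  have h1 : (B <= 2 ^ B)%N by apply: ltnW; apply: ltn_expl.
  have h2 : (2 ^ B <= 2 ^ B.+4)%N.
    by apply: leq_pexp2l => //; apply: (leq_trans (leqnSn B)); do 3! apply: leqW.
  have h3 : (2 ^ B <= 2 ^ (2 ^ B.+4))%N by apply: leq_pexp2l => //; apply: leq_trans h1 h2.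
  exact: leq_trans h1 h3.
have H := harm (2 ^ B.+4).
move: hB H; move: (2 ^ (2 ^ B.+4))%N => N hB H.
exists N; split => //; exact: chunk_core.
Qed.

Lemma iter_sum m B : exists N, (B <= N)%N /\
  m%:R / 2%:R <= \sum_(B.+1 <= p < N.+1 | prime p) ((p%:R : rat)^-1).
Proof.
elim: m => [|m [N1 [BN1 IH]]].
  exists B; split => //; rewrite ?natr0 mul0r sumr_ge0 // => p _; by rewrite invr_ge0 ler0n.
have [N2 [N12 H2]] := chunk N1.
exists N2; split; first exact: leq_trans BN1 N12.
rewrite (@big_cat_nat _ _ _ N1.+1) //=.
have e : (m.+1)%:R = m%:R + 1 :> rat by rewrite mulrSr.
rewrite e mulrDl; move: IH H2; set u := \sum_(_ <= _ < _ | _) _; set v := \sum_(_ <= _ < _ | _) _.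
move=> IH H2; lra.
Qed.

Lemma tau_bound B N : (0 < B)%N ->
  \sum_(B.+1 <= p < N.+1 | prime p) (((p ^ 2)%:R : rat)^-1) <= (B%:R)^-1.
Proof.
move=> B0.
apply: (@le_trans _ _ (\sum_(B.+1 <= p < N.+1) (((p ^ 2)%:R : rat)^-1))).
  rewrite [X in X <= _]big_mkcond /=; apply: ler_sum => p _.
  by case: ifP => // _; rewrite invr_ge0 ler0n.
rewrite big_add1 /= .
case: (leqP B N) => BN; last first.
  rewrite big_geq; last exact: ltnW.
  by rewrite invr_ge0 ler0n.
apply: (@le_trans _ _ (\sum_(B <= k < N) ((- ((k.+1)%:R : rat)^-1) - (- (k%:R)^-1)))).
  apply: ler_sum_nat => k /andP[Bk _].
  have k0 : (0 < k)%N by apply: leq_trans B0 Bk.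
  have kr : (0 : rat) < k%:R by rewrite ltr0n.
  rewrite natrX.
  have -> : (- ((k.+1)%:R : rat)^-1) - (- (k%:R)^-1) = ((k%:R * (k.+1)%:R) : rat)^-1.
    have k1 : (0 : rat) < k%:R + 1 by lra.
    by rewrite mulrSr; field; rewrite (gt_eqF k1) (gt_eqF kr).
  rewrite lef_pV2 ?posrE ?exprn_gt0 ?mulr_gt0 ?ltr0n //.
  by rewrite expr2 ler_pM2r ?ltr0n // ler_nat.
rewrite telescope_sumr //.
have : 0 <= ((N%:R : rat))^-1 by rewrite invr_ge0 ler0n.
lra.
Qed.

Lemma main_nat K : (0 < K)%N -> exists n : nat, (0 < n)%N /\
  exists S : {set 'I_n}, (K.-1 * n <= K * #|S|)%N /\ no_abc_d2 S.
Proof.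
move=> K0.
have [N [BN Hs]] := iter_sum (256 * K) (2 * K).
pose P := [seq p <- index_iota (2 * K).+1 N.+1 | prime p].
have uP : uniq P by rewrite filter_uniq // iota_uniq.
have aP : all prime P by apply: filter_all.
have Hmu : (128 * K)%:R <= muP P.
  rewrite /muP big_filter; apply: le_trans Hs.
  have -> : ((256 * K)%:R : rat) = 2%:R * (128 * K)%:R by rewrite -natrM mulnA.
  set y := ((128 * K)%:R : rat); rewrite (_ : 2%:R * y / 2%:R = y) //; by field.
have Htau : tauP P * (2 * K)%:R <= 1.
  have B0' : (0 < 2 * K)%N by rewrite muln_gt0 K0.
  have h := tau_bound N B0'.
  rewrite /tauP big_filter.
  have B0 : (0 : rat) < (2 * K)%:R by rewrite ltr0n.
  have h' := ler_wpM2r (ltW B0) h.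
  by apply: (le_trans h'); rewrite mulVf ?gt_eqF.
have [S [HS Hno]] := core uP aP K0 Htau Hmu.
by exists (nP P); split; [exact: nP_gt0 | exists S].
Qed.

Local Close Scope ring_scope.
From Stdlib Require Import Reals Lra Psatz.

Theorem corollary3p2 :
  forall eps : R, (0 < eps)%R ->
    exists n : nat, (0 < n)%N /\
      exists S : {set 'I_n},
        ((1 - eps) * INR n <= INR #|S|)%R /\ no_abc_d2 S.
Proof.
move=> eps he.
have [K [hK K0]] := archimed_cor1 eps he.
have K0' : (0 < K)%N by apply/ssrnat.ltP.
have [n [n0 [S [HS Hno]]]] := main_nat K0'.
exists n; split => //; exists S; split => //.
have H := le_INR _ _ (elimT ssrnat.leP HS).
rewrite !mult_INR in H.
have HK : INR K.-1 = (INR K - 1)%R.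
  rewrite -subn1 minus_INR; last by apply/ssrnat.leP.
  by [].
rewrite HK in H.
have Kp : (0 < INR K)%R by apply: lt_0_INR; apply/ssrnat.ltP.
have t : (INR K * / INR K = 1)%R by apply: Rinv_r; apply: Rgt_not_eq.
have nn := pos_INR n.
have ss := pos_INR #|S|.
set k := INR K in H Kp t hK; set x := (/ k)%R in t hK.
have H2 : (x * ((k - 1) * INR n) <= x * (k * INR #|S|))%R.
  by apply: Rmult_le_compat_l => //; apply: Rlt_le; apply: Rinv_0_lt_compat.
have H3 : (x * INR n <= eps * INR n)%R by apply: Rmult_le_compat_r => //; apply: Rlt_le.
Psatz.nra.
Qed.
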